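(* Let $G$ be the final graph of the uncoordinated construction (described in the context) on a finite point set $P\subset\mathbb{R}^d$ with parameter $s>1$, with each edge weighted by its Euclidean length. Then $G$ is a spanner with stretch factor $(s+1)/(s-1)$: for all $p,q\in P$, the shortest path length between $p$ and $q$ in $G$ is at most $\frac{s+1}{s-1}|pq|$.
   Context: Fix $d\ge 1$. Let $P\subset\mathbb{R}^d$ be a finite set of $n\ge 2$ points, $|xy|$ the Euclidean distance, $s>1$. Uncoordinated construction: start with the graph $G$ on vertex set $P$ with no edges. Every ordered pair $(p,q)$ of distinct points of $P$ is processed exactly once, in an arbitrary order, one at a time. When $(p,q)$ is processed, the edge $pq$ is added to $G$ unless $G$ currently contains an edge whose endpoints can be labeled $p',q'$ with $|pp'|\le |p'q'|/(2s+2)$ and $|qq'|\le |p'q'|/(2s+2)$. $G$ is the graph after all pairs are processed. (Equivalently, $G$ consists of the edges $pq$ for the pairs $(p,q)$ selected by the greedy $s$-WSPD algorithm: repeatedly choose an arbitrary pair of points not yet covered, add $(B_r(p),B_r(q))$ with $r=|pq|/(2s+2)$ and $B_r(x)=\{y\in P:|xy|\le r\}$, and mark all pairs $(x,y)$ with $x\in B_r(p)$, $y\in B_r(q)$ as covered.) *)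

(* Defs.v *)
From HB Require Import structures.
From mathcomp Require Import all_boot all_order all_algebra.
From mathcomp Require Import reals.
Set Implicit Arguments. Unset Strict Implicit. Unset Printing Implicit Defensive.
Import Order.TTheory GRing.Theory Num.Theory.
Local Open Scope ring_scope.

Section Defs.
Variables (R : realType) (d : nat).
Notation pt := 'rV[R]_d.

Definition edist (x y : pt) : R :=
  Num.sqrt (\sum_(i < d) (x ord0 i - y ord0 i) ^+ 2).

Definition ordered_pairs (P : seq pt) : seq (pt * pt) :=
  [seq pq <- [seq (p, q) | p <- P, q <- P] | pq.1 != pq.2].

Definition blocks (s : R) (e : pt * pt) (p q : pt) : bool :=
  let r := edist e.1 e.2 / (2 * s + 2) in
  ((edist p e.1 <= r) && (edist q e.2 <= r)) ||
  ((edist p e.2 <= r) && (edist q e.1 <= r)).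

Definition step (s : R) (G : seq (pt * pt)) (pq : pt * pt) : seq (pt * pt) :=
  if has (fun e => blocks s e pq.1 pq.2) G then G else rcons G pq.

Definition uncoordinated (s : R) (order : seq (pt * pt)) : seq (pt * pt) :=
  foldl (step s) [::] order.

Definition adj (G : seq (pt * pt)) : rel pt :=
  fun a b => ((a, b) \in G) || ((b, a) \in G).

Definition walk_len (x : pt) (w : seq pt) : R :=
  \sum_(e <- zip (x :: w) w) edist e.1 e.2.

End Defs.

(* Main.v *)
Require Import Defs.
From HB Require Import structures.
From mathcomp Require Import all_boot all_order all_algebra.
From mathcomp Require Import reals.
From mathcomp Require Import ring lra.
Import Order.TTheory GRing.Theory Num.Theory.
Local Open Scope ring_scope.

Lemma cs (R : realType) (d : nat) (a b : 'I_d -> R) :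
  (\sum_i a i * b i) ^+ 2 <= (\sum_i a i ^+ 2) * (\sum_i b i ^+ 2).
Proof.
have H0 : 0 <= \sum_i \sum_j (a i * b j - a j * b i) ^+ 2.
  by apply: sumr_ge0 => i _; apply: sumr_ge0 => j _; apply: sqr_ge0.
have E : \sum_i \sum_j (a i * b j - a j * b i) ^+ 2 =
   \sum_i \sum_j (a i ^+ 2 * b j ^+ 2) + \sum_i \sum_j (a j ^+ 2 * b i ^+ 2)
   - 2 * \sum_i \sum_j ((a i * b i) * (a j * b j)).
  rewrite -big_split /= mulr_sumr -sumrB; apply: eq_bigr => i _.
  rewrite -big_split /= mulr_sumr -sumrB; apply: eq_bigr => j _.
  ring.
have E1 : \sum_i \sum_j (a i ^+ 2 * b j ^+ 2) = (\sum_i a i ^+ 2) * (\sum_i b i ^+ 2).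
  by rewrite mulr_suml; apply: eq_bigr => i _; rewrite mulr_sumr.
have E2 : \sum_i \sum_j (a j ^+ 2 * b i ^+ 2) = (\sum_i a i ^+ 2) * (\sum_i b i ^+ 2).
  by rewrite mulrC mulr_suml; apply: eq_bigr => i _; rewrite mulr_sumr; apply: eq_bigr => j _; rewrite mulrC.
have E3 : \sum_i \sum_j ((a i * b i) * (a j * b j)) = (\sum_i a i * b i) ^+ 2.
  by rewrite expr2 mulr_suml; apply: eq_bigr => i _; rewrite mulr_sumr.
rewrite E E1 E2 E3 in H0. lra.
Qed.

Set Implicit Arguments. Unset Strict Implicit.
Section M.
Variables (R : realType) (d : nat).
Notation pt := 'rV[R]_d.
Implicit Types x y z : pt.

Lemma edist_ge0 x y : 0 <= edist x y. Proof. exact: sqrtr_ge0. Qed.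
Lemma edist_sym x y : edist x y = edist y x.
Proof. by rewrite /edist; congr Num.sqrt; apply: eq_bigr => i _; rewrite -sqrrN opprB. Qed.
Lemma edist_xx x : edist x x = 0.
Proof. by rewrite /edist big1 ?sqrtr0 // => i _; rewrite subrr expr0n. Qed.
Lemma edist_eq0 x y : edist x y = 0 -> x = y.
Proof.
move/eqP; rewrite sqrtr_eq0 => H.
have H2 : \sum_(i < d) (x ord0 i - y ord0 i) ^+ 2 == 0.
  rewrite eq_le H sumr_ge0 // => i _; exact: sqr_ge0.
move: H2; rewrite psumr_eq0; last by move=> i _; exact: sqr_ge0.
move/allP => Hall; apply/rowP => i.
by have := Hall i (mem_index_enum i); rewrite /= sqrf_eq0 subr_eq0 => /eqP.
Qed.

Lemma edist_triangle x y z : edist x z <= edist x y + edist y z.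
Proof.
rewrite /edist.
set a := fun i => x ord0 i - y ord0 i.
set b := fun i => y ord0 i - z ord0 i.
have -> : \sum_(i < d) (x ord0 i - z ord0 i) ^+ 2 = \sum_i (a i + b i) ^+ 2.
  by apply: eq_bigr => i _; rewrite /a /b; congr (_ ^+ 2); ring.
set A := \sum_(i < d) (x ord0 i - y ord0 i) ^+ 2.
set B := \sum_(i < d) (y ord0 i - z ord0 i) ^+ 2.
have hA : 0 <= A by apply: sumr_ge0 => i _; exact: sqr_ge0.
have hB : 0 <= B by apply: sumr_ge0 => i _; exact: sqr_ge0.
have EAB : \sum_i (a i + b i) ^+ 2 = A + B + 2 * \sum_i a i * b i.
  rewrite /A /B -!big_split mulr_sumr -big_split /=; apply: eq_bigr => i _.
  rewrite /a /b; ring.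
have CS := @cs R d a b.
have hC : \sum_i a i * b i <= Num.sqrt A * Num.sqrt B.
  rewrite -sqrtrM //; apply: le_trans (ler_norm _) _.
  rewrite -sqrtr_sqr ler_sqrt; last exact: mulr_ge0.
  exact: CS.
have -> : Num.sqrt A + Num.sqrt B = Num.sqrt ((Num.sqrt A + Num.sqrt B) ^+ 2).
  by rewrite sqrtr_sqr ger0_norm // addr_ge0 // sqrtr_ge0.
rewrite EAB ler_sqrt; last by apply: sqr_ge0.
rewrite sqrrD !sqr_sqrtr //. 
have : 0 <= Num.sqrt A * Num.sqrt B by apply: mulr_ge0; apply: sqrtr_ge0.
lra.
Qed.

Lemma fold_sub s (G0 l : seq (pt * pt)) : {subset G0 <= foldl (step s) G0 l}.
Proof.
elim: l G0 => [|x l IH] G0 //= e He; apply: IH.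
rewrite /step; case: ifP => // _; by rewrite mem_rcons in_cons He orbT.
Qed.

Lemma fold_in s (G0 l : seq (pt * pt)) e :
  e \in foldl (step s) G0 l -> (e \in G0) || (e \in l).
Proof.
elim: l G0 => [|x l IH] G0 /=; first by move=> ->.
move/IH; rewrite in_cons /step; case: ifP => _.
  by case/orP=> ->; rewrite ?orbT.
rewrite mem_rcons in_cons; case/orP => [/orP[->|->]|->]; by rewrite ?orbT.
Qed.

Lemma fold_cover s (G0 l : seq (pt * pt)) pq : pq \in l ->
  (pq \in foldl (step s) G0 l) \/
  exists2 e, e \in foldl (step s) G0 l & blocks s e pq.1 pq.2.
Proof.
elim: l G0 => [|x l IH] G0 //=; rewrite in_cons => /orP[/eqP ->|H]; last exact: IH.
rewrite /step; case: ifP => [/hasP[e He Hb]|_].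
  by right; exists e => //; apply: fold_sub.
by left; apply: fold_sub; rewrite mem_rcons in_cons eqxx.
Qed.

Lemma walk_len_nil x : walk_len x [::] = 0 :> R.
Proof. by rewrite /walk_len /= big_nil. Qed.

Lemma walk_len_cons x y w : walk_len x (y :: w) = edist x y + walk_len y w.
Proof. by rewrite /walk_len /= big_cons. Qed.

Lemma walk_len_cat x w1 w2 :
  walk_len x (w1 ++ w2) = walk_len x w1 + walk_len (last x w1) w2.
Proof.
elim: w1 x => [|y w1 IH] x /=; first by rewrite walk_len_nil add0r.
by rewrite !walk_len_cons IH addrA.
Qed.

Lemma count_lt (T : eqType) (a b : pred T) (l : seq T) :
  subpred a b -> (exists2 z, z \in l & b z && ~~ a z) -> (count a l < count b l)%N.
Proof.
move=> sab; elim: l => [|x l IH] [z]; rewrite ?in_nil // in_cons => /orP[/eqP ->|Hz] Hb /=.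
  case/andP: Hb => -> /negbTE ->; rewrite add0n add1n ltnS; exact: sub_count.
have := IH (ex_intro2 _ _ z Hz Hb).
case Ha: (a x); first by rewrite (sab _ Ha) ltn_add2l.
by move=> H; rewrite add0n; apply: (leq_trans H); apply: leq_addl.
Qed.

End M.

Lemma arith (R : realType) (s t a b D L W1 W2 : R) :
  1 < s -> t * (s - 1) = s + 1 ->
  0 <= a -> 0 <= b -> a * (2 * s + 2) <= L -> b * (2 * s + 2) <= L ->
  L <= a + D + b -> W1 <= t * a -> W2 <= t * b ->
  W1 + (L + W2) <= t * D.
Proof.
move=> hs ht ha hb h1 h2 h3 hw1 hw2.
have h4 : (s + 1) * (a + b) <= L by nra.
have h5 : (s - 1) * L <= (s + 1) * (D - a - b) by nra.
have h6 : (s - 1) * L <= (s - 1) * (t * (D - a - b)).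
  by rewrite mulrA (mulrC (s - 1) t) ht.
have h7 : L <= t * (D - a - b).
  by rewrite -(ler_pM2l (_ : 0 < s - 1)) //; lra.
nra.
Qed.

Lemma arith_lt (R : realType) (s a b D L : R) :
  1 < s -> 0 < D -> 0 <= a -> 0 <= b -> a * (2 * s + 2) <= L -> b * (2 * s + 2) <= L ->
  L <= a + D + b -> a < D /\ b < D.
Proof. move=> hs hD ha hb h1 h2 h3; split; nra. Qed.

Unset Implicit Arguments.
Set Strict Implicit.

Theorem theorem5 (R : realType) (d : nat) (P : seq 'rV[R]_d) (s : R)
    (order : seq ('rV[R]_d * 'rV[R]_d)) :
  (1 <= d)%N -> uniq P -> (2 <= size P)%N -> 1 < s ->
  perm_eq order (ordered_pairs P) ->
  forall p q, p \in P -> q \in P ->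
  exists w : seq 'rV[R]_d,
    [/\ path (adj (uncoordinated s order)) p w, last p w = q &
        walk_len p w <= (s + 1) / (s - 1) * edist p q].
Proof.
move=> _ _ _ hs hperm.
set G := uncoordinated s order.
set t := (s + 1) / (s - 1).
have hs1 : s - 1 != 0 by rewrite subr_eq0 gt_eqF.
have ht : t * (s - 1) = s + 1 by rewrite /t divfK.
have ht1 : 1 <= t by rewrite /t ler_pdivlMr ?subr_gt0 //; lra.
set AP := [seq (x, y) | x <- P, y <- P].
have inord : forall e, e \in order -> (e.1 \in P) /\ (e.2 \in P).
  move=> [x y]; rewrite (perm_mem hperm) mem_filter => /andP[_ /allpairsP[[u v] /= [hu hv [-> ->]]]].
  by [].
have ordin : forall x y, x \in P -> y \in P -> x != y -> (x, y) \in order.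
  move=> x y hx hy hxy; rewrite (perm_mem hperm) mem_filter /= hxy /=.
  exact: (allpairs_f pair hx hy).
suff main : forall (n : nat) p q, p \in P -> q \in P ->
   (count (fun z : _ * _ => (edist z.1 z.2 < edist p q)%R) AP < n)%N ->
   exists w, [/\ path (adj G) p w, last p w = q & walk_len p w <= t * edist p q].
  by move=> p q hp hq; apply: (main _ p q hp hq (ltnSn _)).
elim=> [//|n IHn] p q hp hq hcnt.
have IH : forall x y, x \in P -> y \in P -> edist x y < edist p q ->
   exists w, [/\ path (adj G) x w, last x w = y & walk_len x w <= t * edist x y].
  move=> x y hx hy hlt; apply: IHn => //.
  rewrite -ltnS; apply: leq_trans hcnt; rewrite ltnS.
  apply: count_lt.
    by move=> z /= hz; apply: lt_trans hz hlt.
  exists (x, y); first exact: allpairs_f.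
  by rewrite /= hlt ltxx.
have [<-|hpq] := eqVneq p q.
  exists [::]; split => //; by rewrite walk_len_nil edist_xx mulr0.
have hD : 0 < edist p q.
  rewrite lt_def edist_ge0 andbT; apply/eqP => /edist_eq0 E; by rewrite E eqxx in hpq.
have step_comb : forall p' q', p' \in P -> q' \in P -> adj G p' q' ->
    edist p p' * (2 * s + 2) <= edist p' q' -> edist q q' * (2 * s + 2) <= edist p' q' ->
    exists w, [/\ path (adj G) p w, last p w = q & walk_len p w <= t * edist p q].
  move=> p' q' hp' hq' hadj h1 h2.
  have h3 : edist p' q' <= edist p p' + edist p q + edist q q'.
    have t1 := edist_triangle p' p q'; have t2 := edist_triangle p q q'.
    rewrite (edist_sym p' p) in t1; lra.
  have [lt1 lt2] := arith_lt hs hD (edist_ge0 _ _) (edist_ge0 _ _) h1 h2 h3.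
  have [w1 [pw1 lw1 hw1]] := IH p p' hp hp' lt1.
  have lt2' : edist q' q < edist p q by rewrite edist_sym.
  have [w2 [pw2 lw2 hw2]] := IH q' q hq' hq lt2'.
  exists (w1 ++ q' :: w2); split.
  - by rewrite cat_path pw1 lw1 /= hadj.
  - by rewrite last_cat lw1 /= lw2.
  - rewrite walk_len_cat lw1 walk_len_cons.
    apply: (arith hs ht (edist_ge0 _ _) (edist_ge0 _ _) h1 h2 h3 hw1).
    by rewrite edist_sym.
have [H|[e He Hb]] := fold_cover s [::] (ordin p q hp hq hpq).
  exists [:: q]; split => //=.
    by rewrite andbT /adj H.
  rewrite walk_len_cons walk_len_nil addr0.
  have := edist_ge0 p q; nra.
have [he1 he2] : (e.1 \in P) /\ (e.2 \in P).
  by apply: inord; have := fold_in He; rewrite in_nil.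
have hs0 : 0 < 2 * s + 2 by lra.
move: Hb; rewrite /blocks !ler_pdivlMr //.
case/orP => /andP[h1 h2].
  apply: (step_comb e.1 e.2) => //.
  by rewrite /adj -surjective_pairing He.
rewrite (edist_sym e.1 e.2) in h1 h2.
apply: (step_comb e.2 e.1) => //.
by rewrite /adj -surjective_pairing He orbT.
Qed.
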